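(* Let $t, u, v$ be integers with $t \ge 2$, $u \ge 2$, $v \ge 2$, and let $\lambda, \gamma$ be rationals with $\lambda < \gamma(u-v)$. Put $d = (v-1)t - v$, \[ \tau = \frac{\lambda + \gamma(v-1)t}{(v-1)t + u - v}, \qquad L(b) = \gamma - [\gamma(u-v) - \lambda]\,\frac{b\,[d(b-1)+t]}{[(d+u)(b-1)+t]\,[db+t]} \quad (b \ge 1 \text{ integer}). \] Then: (i) if $t = v = u = 2$, then $L(b) = \tau$ for all $b \ge 1$; (ii) if $u = t$ and either $t > 2$ or $v > 2$, then $L(1) = \tau$ and $L(b) > \tau$ for all $b \ge 2$; (iii) if $u < t$, then $L(b) > \tau$ for all $b \ge 1$; (iv) if $u > t$, then $L(1) = \min_{b \ge 1} L(b) < \tau$. Consequently $L(b) \ge \min\{\tau, L(1)\}$ for all $b \ge 1$. *)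

(* Defs.v *)
From mathcomp Require Import all_boot all_order all_algebra.
Set Implicit Arguments. Unset Strict Implicit. Unset Printing Implicit Defensive.
Import Order.TTheory GRing.Theory Num.Theory.
Local Open Scope ring_scope.

Definition dpar (t v : int) : int := (v - 1) * t - v.

Definition tau (t u v : int) (lam gam : rat) : rat :=
  (lam + gam * ((v - 1) * t)%:~R) / ((v - 1) * t + u - v)%:~R.

Definition Lfun (t u v : int) (lam gam : rat) (b : int) : rat :=
  let d := dpar t v in
  gam - (gam * (u - v)%:~R - lam) *
        ((b * (d * (b - 1) + t))%:~R /
         (((d + u) * (b - 1) + t) * (d * b + t))%:~R).

(* Main.v *)
Require Import Defs.
From mathcomp Require Import all_boot all_order all_algebra ring lra zify.
Import Order.TTheory GRing.Theory Num.Theory.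
Local Open Scope ring_scope.

Lemma idA (T U V B lam gam : rat) :
  (V - 1) * T - V + U != 0 -> ((V - 1) * T - V + U) * (B - 1) + T != 0 -> ((V - 1) * T - V) * B + T != 0 ->
  (gam - (gam * (U - V) - lam) * ((B * (((V - 1) * T - V) * (B - 1) + T)) / ((((V - 1) * T - V + U) * (B - 1) + T) * (((V - 1) * T - V) * B + T))))
  - (lam + gam * ((V - 1) * T)) / ((V - 1) * T + U - V)
  = (gam * (U - V) - lam) * T * (((V - 1) * T - V) * (B - 1) + T - U) / (((V - 1) * T - V + U) * ((((V - 1) * T - V + U) * (B - 1) + T) * (((V - 1) * T - V) * B + T))).
Proof.
move=> h1 h2 h3.
have h1' : (V - 1) * T + U - V != 0 by rewrite -addrA (addrC U) addrA.
by field; rewrite h1 h2 h3.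
Qed.

Lemma idB (T U V B lam gam : rat) :
  T != 0 -> (V - 1) * T - V + T != 0 -> ((V - 1) * T - V + U) * (B - 1) + T != 0 -> ((V - 1) * T - V) * B + T != 0 ->
  (gam - (gam * (U - V) - lam) * ((B * (((V - 1) * T - V) * (B - 1) + T)) / ((((V - 1) * T - V + U) * (B - 1) + T) * (((V - 1) * T - V) * B + T))))
  - (gam - (gam * (U - V) - lam) * ((1 * (((V - 1) * T - V) * (1 - 1) + T)) / ((((V - 1) * T - V + U) * (1 - 1) + T) * (((V - 1) * T - V) * 1 + T))))
  = (gam * (U - V) - lam) * (B - 1) * ((U - T) * ((V - 1) * T - V) * B + T * ((V - 1) * T - V + U - T)) / (((V - 1) * T - V + T) * ((((V - 1) * T - V + U) * (B - 1) + T) * (((V - 1) * T - V) * B + T))).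
Proof.
move=> h0 h1 h2 h3.
by field; rewrite h0 h1 h2 h3.
Qed.

Lemma sgnh (c T : rat) (X D P : int) : 0 < c -> 0 < T -> 0 < D -> 0 < P ->
  ((0 < c * T * X%:~R / (D%:~R * P%:~R)) = (0 < X)) /\
  ((0 <= c * T * X%:~R / (D%:~R * P%:~R)) = (0 <= X)).
Proof.
move=> hc hT hD hP.
have hk : 0 < c * T / (D%:~R * P%:~R).
  by rewrite divr_gt0 ?mulr_gt0 // ltr0z.
rewrite mulrAC.
by rewrite pmulr_rgt0 // pmulr_rge0 // ltr0z ler0z.
Qed.

Theorem lemma25 (t u v : int) (lam gam : rat)
  (ht : 2 <= t) (hu : 2 <= u) (hv : 2 <= v)
  (hlam : lam < gam * (u - v)%:~R) :
  let tau0 := tau t u v lam gam in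
  let L := Lfun t u v lam gam in
  [/\ (t = 2 /\ v = 2 /\ u = 2 -> forall b : int, 1 <= b -> L b = tau0),
      (u = t -> (2 < t \/ 2 < v) ->
         L 1 = tau0 /\ forall b : int, 2 <= b -> tau0 < L b),
      (u < t -> forall b : int, 1 <= b -> tau0 < L b),
      (t < u -> (forall b : int, 1 <= b -> L 1 <= L b) /\ L 1 < tau0)
    & forall b : int, 1 <= b -> Num.min tau0 (L 1) <= L b].
Proof.
move=> tau0 L.
have hc : 0 < gam * (u - v)%:~R - lam by rewrite subr_gt0.
have hd : 0 <= dpar t v by rewrite /dpar; nia.
have hT : 0 < (t%:~R : rat) by rewrite ltr0z; lia.
have E1 : forall b, 1 <= b -> L b - tau0 = (gam * (u - v)%:~R - lam) * t%:~R *
   (dpar t v * (b - 1) + t - u)%:~R / ((dpar t v + u)%:~R * (((dpar t v + u) * (b - 1) + t) * (dpar t v * b + t))%:~R).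
  move=> b hb.
  have n1 : ((dpar t v + u)%:~R : rat) != 0 by rewrite intr_eq0; lia.
  have n2 : ((((dpar t v + u) * (b - 1) + t))%:~R : rat) != 0 by rewrite intr_eq0; nia.
  have n3 : (((dpar t v * b + t))%:~R : rat) != 0 by rewrite intr_eq0; nia.
  rewrite /L /tau0 /Lfun /tau /= /dpar !(intrD, intrB, intrM, intrN, rmorph1) in n1 n2 n3 *.
  by rewrite idA.
have E2 : forall b, 1 <= b -> L b - L 1 = (gam * (u - v)%:~R - lam) * (b - 1)%:~R *
   ((u - t) * dpar t v * b + t * (dpar t v + u - t))%:~R / ((dpar t v + t)%:~R * (((dpar t v + u) * (b - 1) + t) * (dpar t v * b + t))%:~R).
  move=> b hb.
  have n0 : (t%:~R : rat) != 0 by rewrite intr_eq0; lia.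
  have n1 : ((dpar t v + t)%:~R : rat) != 0 by rewrite intr_eq0; lia.
  have n2 : ((((dpar t v + u) * (b - 1) + t))%:~R : rat) != 0 by rewrite intr_eq0; nia.
  have n3 : (((dpar t v * b + t))%:~R : rat) != 0 by rewrite intr_eq0; nia.
  rewrite /L /tau0 /Lfun /tau /= /dpar !(intrD, intrB, intrM, intrN, rmorph1) in n0 n1 n2 n3 *.
  by rewrite idB.
have hD : 0 < dpar t v + u by lia.
have hP : forall b, 1 <= b -> 0 < ((dpar t v + u) * (b - 1) + t) * (dpar t v * b + t).
  by move=> b hb; apply: mulr_gt0; nia.
have hD2 : 0 < dpar t v + t by lia.
have G1 : forall b, 1 <= b -> (0 < L b - tau0) = (0 < dpar t v * (b - 1) + t - u).
  by move=> b hb; rewrite E1 // (@sgnh _ _ _ _ _ hc hT hD (hP b hb)).1.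
have G2 : forall b, 1 <= b -> (0 <= L b - tau0) = (0 <= dpar t v * (b - 1) + t - u).
  by move=> b hb; rewrite E1 // (@sgnh _ _ _ _ _ hc hT hD (hP b hb)).2.
have G0 : forall b, 1 <= b -> dpar t v * (b - 1) + t - u = 0 -> L b = tau0.
  move=> b hb hX; apply/eqP; rewrite -subr_eq0 E1 // hX.
  by rewrite mulr0 mul0r.
have G3 : forall b, 1 <= b -> t < u -> L 1 <= L b.
  move=> b hb htu; rewrite -subr_ge0 E2 //.
  apply: divr_ge0; last by apply: mulr_ge0; rewrite ler0z; [lia | exact: ltW (hP b hb)].
  apply: mulr_ge0; first by apply: mulr_ge0; [exact: ltW | rewrite ler0z; lia].
  rewrite ler0z; nia.
split.
- move=> [ht2 [hv2 hu2]] b hb; apply: G0 => //.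
  by rewrite hu2 ht2 hv2 /dpar; lia.
- move=> hut h2; split; first by apply: G0 => //; lia.
  move=> b hb; rewrite -subr_gt0 G1; last by lia.
  have : 1 <= dpar t v by rewrite /dpar; nia.
  nia.
- move=> hut b hb; rewrite -subr_gt0 G1 //; nia.
- move=> htu; split; first by move=> b hb; apply: G3.
  rewrite -subr_lt0 ltNge G2 //; lia.
- move=> b hb; rewrite ge_min; case: (lerP u t) => h.
    by apply/orP; left; rewrite -subr_ge0 G2 //; nia.
  by apply/orP; right; apply: G3.
Qed.
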